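(* Points $A,B,C,D\in I^3$ are consecutive vertices of a convex quadrilateral not lying in an isotropic plane if and only if the planes $A^*,B^*,C^*,D^*$ contain consecutive flat angles of an admissible convex 4-hedral angle.
   Context: $I^3$ is $\mathbb{R}^3$ with coordinates $(x,y,z)$; a line or plane is isotropic if parallel to the $z$-axis. Metric duality: a point $P=(P^1,P^2,P^3)$ corresponds to the plane $P^*\colon z=P^1x+P^2y-P^3$. Given a convex quadrilateral in a plane and a point $O$ not in the plane, the union of all rays from $O$ meeting the quadrilateral is a convex 4-hedral angle with vertex $O$; the union of rays from $O$ meeting one side of the quadrilateral is a flat angle; the four flat angles are consecutive in the order of the sides. The 4-hedral angle is admissible if the isotropic line through $O$ meets its interior. *)

(* Defs.v *)
From HB Require Import structures.
From mathcomp Require Import all_boot all_order all_algebra.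
From mathcomp Require Import reals.
Set Implicit Arguments. Unset Strict Implicit. Unset Printing Implicit Defensive.
Import Order.TTheory GRing.Theory Num.Theory.
Local Open Scope ring_scope.

(* Points of I^3 = R^3 are row vectors 'rV[R]_3; coordinates
   x = p 0 0, y = p 0 1, z = p 0 2. *)
Section Defs.
Variable R : realType.
Notation pt := 'rV[R]_3.

Definition xc (p : pt) : R := p 0 0.
Definition yc (p : pt) : R := p 0 1.
Definition zc (p : pt) : R := p 0 2%:R.

Definition dotp (u v : pt) : R := \sum_(i < 3) u 0 i * v 0 i.

Definition dual_plane (P : pt) : pt -> Prop :=
  fun X => zc X = xc P * xc X + yc P * yc X - zc P.

Definition collinear3 (P Q S : pt) : Prop :=
  exists (a d : pt), d != 0 /\
    (exists t : R, P = a + t *: d) /\ (exists t : R, Q = a + t *: d) /\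
    (exists t : R, S = a + t *: d).

(* A, B, C, D are consecutive vertices of a (non-degenerate) convex
   quadrilateral: the vertices are not all collinear and the diagonals
   AC and BD cross at a point interior to both. *)
Definition convex_quad (A B C D : pt) : Prop :=
  ~ collinear3 A B C /\
  exists s t : R, 0 < s < 1 /\ 0 < t < 1 /\
    A + s *: (C - A) = B + t *: (D - B).

(* the four points lie in an isotropic (vertical) plane a x + b y = c *)
Definition in_isotropic_plane (A B C D : pt) : Prop :=
  exists a b c : R, (a != 0 \/ b != 0) /\
    (forall X, X \in [:: A; B; C; D] -> a * xc X + b * yc X = c).

Definition off_plane (O P1 P2 P3 P4 : pt) : Prop :=
  exists (n : pt) (c : R), n != 0 /\
    dotp n P1 = c /\ dotp n P2 = c /\ dotp n P3 = c /\ dotp n P4 = c /\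
    dotp n O != c.

Definition quad_region (P1 P2 P3 P4 : pt) : pt -> Prop :=
  fun X => exists l1 l2 l3 l4 : R,
    0 <= l1 /\ 0 <= l2 /\ 0 <= l3 /\ 0 <= l4 /\ l1 + l2 + l3 + l4 = 1 /\
    X = l1 *: P1 + l2 *: P2 + l3 *: P3 + l4 *: P4.

Definition rays_from (O : pt) (S : pt -> Prop) : pt -> Prop :=
  fun Y => exists (t : R) (X : pt), 0 <= t /\ S X /\ Y = O + t *: (X - O).

Definition segment (P Q : pt) : pt -> Prop :=
  fun X => exists u : R, 0 <= u <= 1 /\ X = P + u *: (Q - P).

Definition hedral_angle (O P1 P2 P3 P4 : pt) : pt -> Prop :=
  rays_from O (quad_region P1 P2 P3 P4).

Definition flat_angle (O P Q : pt) : pt -> Prop := rays_from O (segment P Q).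

Definition is_convex_4hedral (O P1 P2 P3 P4 : pt) : Prop :=
  convex_quad P1 P2 P3 P4 /\ off_plane O P1 P2 P3 P4.

Definition interior3 (S : pt -> Prop) : pt -> Prop :=
  fun X => exists e : R, 0 < e /\
    forall Y : pt, dotp (Y - X) (Y - X) < e -> S Y.

(* admissible: the isotropic line through O meets the interior *)
Definition admissible (O P1 P2 P3 P4 : pt) : Prop :=
  exists Y : pt, xc Y = xc O /\ yc Y = yc O /\
    interior3 (hedral_angle O P1 P2 P3 P4) Y.

Definition subset3 (S T : pt -> Prop) : Prop := forall X, S X -> T X.

End Defs.

(* Main.v *)
Require Import Defs.
From HB Require Import structures.
From mathcomp Require Import all_boot all_order all_algebra.
From mathcomp Require Import reals.
From mathcomp Require Import ring lra.
Import Order.TTheory GRing.Theory Num.Theory.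
Local Open Scope ring_scope.


Section S.
Context {R : realType}.
Implicit Types u v w O P Q S A B C D X Y : 'rV[R]_3.

Lemma rv3P u v : xc u = xc v -> yc u = yc v -> zc u = zc v -> u = v.
Proof.
rewrite /xc /yc /zc => h0 h1 h2; apply/rowP => -[[|[|[|//]]] Hj].
- by rewrite (_ : Ordinal Hj = 0) //; apply/val_inj.
- by rewrite (_ : Ordinal Hj = 1) //; apply/val_inj.
- by rewrite (_ : Ordinal Hj = 2%:R) //; apply/val_inj.
Qed.

Lemma dotpE u v : dotp u v = xc u * xc v + yc u * yc v + zc u * zc v.
Proof.
rewrite /dotp !big_ord_recr big_ord0 /= add0r /xc /yc /zc.
by do !congr (_ + _); congr (_ * _); congr (_ _ _); apply/val_inj.
Qed.

Definition mkv (x y z : R) : 'rV[R]_3 := \row_(i < 3) [:: x; y; z]`_i.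
Lemma mkvx x y z : xc (mkv x y z) = x. Proof. by rewrite /xc mxE. Qed.
Lemma mkvy x y z : yc (mkv x y z) = y. Proof. by rewrite /yc mxE. Qed.
Lemma mkvz x y z : zc (mkv x y z) = z. Proof. by rewrite /zc mxE. Qed.
Lemma xcD u v : xc (u + v) = xc u + xc v. Proof. by rewrite /xc mxE. Qed.
Lemma ycD u v : yc (u + v) = yc u + yc v. Proof. by rewrite /yc mxE. Qed.
Lemma zcD u v : zc (u + v) = zc u + zc v. Proof. by rewrite /zc mxE. Qed.
Lemma xcN u : xc (- u) = - xc u. Proof. by rewrite /xc mxE. Qed.
Lemma ycN u : yc (- u) = - yc u. Proof. by rewrite /yc mxE. Qed.
Lemma zcN u : zc (- u) = - zc u. Proof. by rewrite /zc mxE. Qed.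
Lemma xcZ k u : xc (k *: u) = k * xc u. Proof. by rewrite /xc mxE. Qed.
Lemma ycZ k u : yc (k *: u) = k * yc u. Proof. by rewrite /yc mxE. Qed.
Lemma zcZ k u : zc (k *: u) = k * zc u. Proof. by rewrite /zc mxE. Qed.
Lemma xc0 : xc (0 : 'rV[R]_3) = 0. Proof. by rewrite /xc mxE. Qed.
Lemma yc0 : yc (0 : 'rV[R]_3) = 0. Proof. by rewrite /yc mxE. Qed.
Lemma zc0 : zc (0 : 'rV[R]_3) = 0. Proof. by rewrite /zc mxE. Qed.

Definition crdE := (xcD, ycD, zcD, xcN, ycN, zcN, xcZ, ycZ, zcZ, xc0, yc0, zc0,
  mkvx, mkvy, mkvz).

Lemma crd_eq u v : u = v -> [/\ xc u = xc v, yc u = yc v & zc u = zc v].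
Proof. by move->. Qed.

Definition det3 u v w := xc u * (yc v * zc w - zc v * yc w)
  - yc u * (xc v * zc w - zc v * xc w) + zc u * (xc v * yc w - yc v * xc w).
Definition cross u v := mkv (yc u * zc v - zc u * yc v)
  (zc u * xc v - xc u * zc v) (xc u * yc v - yc u * xc v).
Definition liftz u := mkv (xc u) (yc u) 1.
Definition ort u v w := det3 (liftz u) (liftz v) (liftz w).

Lemma sq_gt0 (x : R) : x != 0 -> 0 < x * x.
Proof. by move=> hx; rewrite -expr2 exprn_even_gt0. Qed.

Lemma pos_of_mul (a b : R) : 0 < a * b -> 0 < b -> 0 < a.
Proof. by move=> h hb; rewrite -(pmulr_lgt0 _ hb). Qed.

Lemma L_col_det O P Q S : collinear3 P Q S -> det3 (P - O) (Q - O) (S - O) = 0.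
Proof.
case=> a [d] [_ [[t1 ->] [[t2 ->] [t3 ->]]]].
rewrite /det3 !crdE; ring.
Qed.

Lemma L_col_ort P Q S : collinear3 P Q S -> ort P Q S = 0.
Proof.
case=> a [d] [_ [[t1 ->] [[t2 ->] [t3 ->]]]].
rewrite /ort /det3 /liftz !crdE; ring.
Qed.


Lemma ratio (a b c d : R) : a != 0 -> a * d = b * c -> d = c / a * b.
Proof. by move=> ha h; apply: (mulfI ha); rewrite h; field. Qed.

Lemma nz_coord u : u != 0 -> [\/ xc u != 0, yc u != 0 | zc u != 0].
Proof.
move=> hu; apply/or3P; apply/negPn/negP; rewrite !negb_or !negbK.
case/and3P => /eqP h1 /eqP h2 /eqP h3; move/eqP: hu; apply.
by apply: rv3P; rewrite !crdE.
Qed.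

Lemma L_cross0 P Q S :
  yc (Q - P) * zc (S - P) - zc (Q - P) * yc (S - P) = 0 ->
  zc (Q - P) * xc (S - P) - xc (Q - P) * zc (S - P) = 0 ->
  xc (Q - P) * yc (S - P) - yc (Q - P) * xc (S - P) = 0 ->
  collinear3 P Q S.
Proof.
move=> h1 h2 h3.
have P0 : P = P + 0 *: (Q - P) by rewrite scale0r addr0.
case: (eqVneq (Q - P) 0) => hv.
  have eQ : Q = P by apply/eqP; rewrite -subr_eq0 hv.
  case: (eqVneq (S - P) 0) => hw.
    have eS : S = P by apply/eqP; rewrite -subr_eq0 hw.
    exists P, (mkv 1 0 0); split.
      apply/eqP => /crd_eq; rewrite !crdE => -[h _ _].
      by move/eqP: h; rewrite oner_eq0.
    split; first by exists 0; rewrite scale0r addr0.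
    by split; [exists 0; rewrite eQ | exists 0; rewrite eS]; rewrite scale0r addr0.
  exists P, (S - P); split => //.
  split; first by exists 0; rewrite scale0r addr0.
  split; first by exists 0; rewrite eQ scale0r addr0.
  by exists 1; rewrite scale1r addrC subrK.
exists P, (Q - P); split => //.
split; first by exists 0; rewrite scale0r addr0.
split; first by exists 1; rewrite scale1r addrC subrK.
move: h1 h2 h3; rewrite !crdE => h1 h2 h3.
case/nz_coord: hv; rewrite !crdE => hx.
- exists ((xc S - xc P) / (xc Q - xc P)); apply: rv3P; rewrite !crdE.
  + by field.
  + rewrite -(ratio _ _ _ _ hx (_ : (xc Q - xc P) * (yc S - yc P) = (yc Q - yc P) * (xc S - xc P))); [ring | lra].
  + rewrite -(ratio _ _ _ _ hx (_ : (xc Q - xc P) * (zc S - zc P) = (zc Q - zc P) * (xc S - xc P))); [ring | lra].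
- exists ((yc S - yc P) / (yc Q - yc P)); apply: rv3P; rewrite !crdE.
  + rewrite -(ratio _ _ _ _ hx (_ : (yc Q - yc P) * (xc S - xc P) = (xc Q - xc P) * (yc S - yc P))); [ring | lra].
  + by field.
  + rewrite -(ratio _ _ _ _ hx (_ : (yc Q - yc P) * (zc S - zc P) = (zc Q - zc P) * (yc S - yc P))); [ring | lra].
- exists ((zc S - zc P) / (zc Q - zc P)); apply: rv3P; rewrite !crdE.
  + rewrite -(ratio _ _ _ _ hx (_ : (zc Q - zc P) * (xc S - xc P) = (xc Q - xc P) * (zc S - zc P))); [ring | lra].
  + rewrite -(ratio _ _ _ _ hx (_ : (zc Q - zc P) * (yc S - yc P) = (yc Q - yc P) * (zc S - zc P))); [ring | lra].
  + by field.
Qed.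


Lemma L_noncol P1 P2 P3 O n c : ~ collinear3 P1 P2 P3 ->
  dotp n P1 = c -> dotp n P2 = c -> dotp n P3 = c -> dotp n O != c ->
  det3 (P1 - O) (P2 - O) (P3 - O) != 0.
Proof.
move=> ncol h1 h2 h3 hO; apply/negP => /eqP hd; apply: ncol.
have hk : c - dotp n O != 0 by rewrite subr_eq0 eq_sym.
pose v := P2 - P1; pose w := P3 - P1; pose u := P1 - O.
have Ex : (dotp n P1 - dotp n O) * xc (cross v w) =
  (dotp n P3 - dotp n P1) * xc (cross v u) - (dotp n P2 - dotp n P1) * xc (cross w u)
  + xc n * det3 (P1 - O) (P2 - O) (P3 - O).
  by rewrite /cross /det3 /v /w /u !dotpE !crdE; ring.
have Ey : (dotp n P1 - dotp n O) * yc (cross v w) =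
  (dotp n P3 - dotp n P1) * yc (cross v u) - (dotp n P2 - dotp n P1) * yc (cross w u)
  + yc n * det3 (P1 - O) (P2 - O) (P3 - O).
  by rewrite /cross /det3 /v /w /u !dotpE !crdE; ring.
have Ez : (dotp n P1 - dotp n O) * zc (cross v w) =
  (dotp n P3 - dotp n P1) * zc (cross v u) - (dotp n P2 - dotp n P1) * zc (cross w u)
  + zc n * det3 (P1 - O) (P2 - O) (P3 - O).
  by rewrite /cross /det3 /v /w /u !dotpE !crdE; ring.
have Fx : (c - dotp n O) * xc (cross v w) = 0 by rewrite -{1}h1 Ex h1 h2 h3 hd; ring.
have Fy : (c - dotp n O) * yc (cross v w) = 0 by rewrite -{1}h1 Ey h1 h2 h3 hd; ring.
have Fz : (c - dotp n O) * zc (cross v w) = 0 by rewrite -{1}h1 Ez h1 h2 h3 hd; ring.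
move/eqP: Fx; rewrite mulf_eq0 (negbTE hk) /= => /eqP Fx.
move/eqP: Fy; rewrite mulf_eq0 (negbTE hk) /= => /eqP Fy.
move/eqP: Fz; rewrite mulf_eq0 (negbTE hk) /= => /eqP Fz.
move: Fx Fy Fz; rewrite /cross /v /w !crdE => Gx Gy Gz.
by apply: L_cross0; rewrite !crdE.
Qed.

Lemma L_sgn u1 u2 u3 u4 (s t : R) : 0 < s < 1 -> 0 < t < 1 ->
  u1 + s *: (u3 - u1) = u2 + t *: (u4 - u2) -> det3 u1 u2 u3 != 0 ->
  [/\ 0 < det3 u1 u2 u3 * det3 u2 u3 u4, 0 < det3 u1 u2 u3 * det3 u3 u4 u1
    & 0 < det3 u1 u2 u3 * det3 u4 u1 u2].
Proof.
move=> /andP[s0 s1] /andP[t0 t1] /crd_eq[]; rewrite !crdE => ex ey ez hD.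
have tn : t != 0 by rewrite gt_eqF.
have e4x : xc u4 = (xc u1 + s * (xc u3 - xc u1) - xc u2 + t * xc u2) / t.
  by rewrite ex; field.
have e4y : yc u4 = (yc u1 + s * (yc u3 - yc u1) - yc u2 + t * yc u2) / t.
  by rewrite ey; field.
have e4z : zc u4 = (zc u1 + s * (zc u3 - zc u1) - zc u2 + t * zc u2) / t.
  by rewrite ez; field.
have sq := sq_gt0 _ hD.
set D := det3 u1 u2 u3 in hD sq *.
have -> : D * det3 u2 u3 u4 = D * D * (1 - s) / t.
  by rewrite /D /det3 e4x e4y e4z; field.
have -> : D * det3 u3 u4 u1 = D * D * (1 - t) / t.
  by rewrite /D /det3 e4x e4y e4z; field.
have -> : D * det3 u4 u1 u2 = D * D * s / t.
  by rewrite /D /det3 e4x e4y e4z; field.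
split; apply: divr_gt0 => //; apply: mulr_gt0 => //; lra.
Qed.


Lemma frac01 (a b : R) : 0 < a -> 0 < b -> 0 < a / (a + b) < 1.
Proof.
move=> ha hb; apply/andP; split; first by apply: divr_gt0; lra.
by rewrite ltr_pdivrMr; lra.
Qed.

Lemma L_conv u1 u2 u3 u4 h (mu : R) :
  0 < mu * det3 u1 u2 u3 -> 0 < mu * det3 u2 u3 u4 ->
  0 < mu * det3 u3 u4 u1 -> 0 < mu * det3 u4 u1 u2 ->
  dotp h u1 = 1 -> dotp h u2 = 1 -> dotp h u3 = 1 -> dotp h u4 = 1 ->
  exists s t : R, 0 < s < 1 /\ 0 < t < 1 /\
    u1 + s *: (u3 - u1) = u2 + t *: (u4 - u2).
Proof.
move=> p1 p2 p3 p4 h1 h2 h3 h4.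
have hS : det3 u2 u3 u4 + det3 u4 u1 u2 = det3 u3 u4 u1 + det3 u1 u2 u3.
  have E : det3 u2 u3 u4 * dotp h u1 + det3 u4 u1 u2 * dotp h u3 =
           det3 u3 u4 u1 * dotp h u2 + det3 u1 u2 u3 * dotp h u4.
    by rewrite /det3 !dotpE; ring.
  by move: E; rewrite h1 h2 h3 h4 !mulr1.
set D1 := det3 u1 u2 u3 in p1 hS *; set D2 := det3 u2 u3 u4 in p2 hS *.
set D3 := det3 u3 u4 u1 in p3 hS *; set D4 := det3 u4 u1 u2 in p4 hS *.
have mu0 : mu != 0 by apply/negP => /eqP m0; move: p1; rewrite m0 mul0r ltxx.
have pS : 0 < mu * D2 + mu * D4 by lra.
have S0 : D2 + D4 != 0.
  by apply/negP => /eqP e; move: pS; rewrite -mulrDr e mulr0 ltxx.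
have S1 : D3 + D1 != 0 by rewrite -hS.
have S2 : D1 + D3 != 0 by rewrite addrC -hS.
have I : forall f : 'rV[R]_3 -> R, f = @xc R \/ f = @yc R \/ f = @zc R ->
    D2 * f u1 + D4 * f u3 = D3 * f u2 + D1 * f u4.
  by move=> f [->|[->|->]]; rewrite /D1 /D2 /D3 /D4 /det3; ring.
exists (mu * D4 / (mu * D4 + mu * D2)), (mu * D1 / (mu * D1 + mu * D3)).
split; first by apply: frac01; lra.
split; first by apply: frac01; lra.
have es : mu * D4 / (mu * D4 + mu * D2) = D4 / (D2 + D4).
  by rewrite -!mulrDr [D4 + D2]addrC; field; apply/andP.
have et : mu * D1 / (mu * D1 + mu * D3) = D1 / (D2 + D4).
  by rewrite -!mulrDr hS; field; apply/andP.
rewrite es et.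
have G : forall f : 'rV[R]_3 -> R, f = @xc R \/ f = @yc R \/ f = @zc R ->
   f u1 + D4 / (D2 + D4) * (f u3 - f u1) = f u2 + D1 / (D2 + D4) * (f u4 - f u2).
  move=> f hf.
  have -> : f u1 + D4 / (D2 + D4) * (f u3 - f u1) = (D2 * f u1 + D4 * f u3) / (D2 + D4).
    by field.
  have -> : f u2 + D1 / (D2 + D4) * (f u4 - f u2) = (D3 * f u2 + D1 * f u4) / (D2 + D4).
    by rewrite hS; field.
  by rewrite I.
apply: rv3P; rewrite !crdE; apply: G; auto.
Qed.


Lemma L_flat O P Q : flat_angle O P Q O /\ flat_angle O P Q P /\ flat_angle O P Q Q.
Proof.
have sP : segment P Q P by exists 0; rewrite lexx ler01 scale0r addr0.
have sQ : segment P Q Q by exists 1; rewrite ler01 lexx scale1r addrC subrK.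
split; first by exists 0, P; rewrite lexx scale0r addr0.
split; first by exists 1, P; rewrite ler01 scale1r addrC subrK.
by exists 1, Q; rewrite ler01 scale1r addrC subrK.
Qed.

Lemma L_sub A O P Q : dual_plane A O ->
  zc (P - O) = xc A * xc (P - O) + yc A * yc (P - O) ->
  zc (Q - O) = xc A * xc (Q - O) + yc A * yc (Q - O) ->
  subset3 (flat_angle O P Q) (dual_plane A).
Proof.
rewrite /dual_plane !crdE => hO hP hQ Y [t [X [_ [[u [_ ->]] ->]]]].
have eP : zc P = zc O + xc A * (xc P - xc O) + yc A * (yc P - yc O) by lra.
have eQ : zc Q = zc O + xc A * (xc Q - xc O) + yc A * (yc Q - yc O) by lra.
rewrite !crdE eP eQ hO; ring.
Qed.

Lemma dotp_ge0 v : 0 <= dotp v v.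
Proof. by rewrite dotpE -!expr2; apply: addr_ge0; [apply: addr_ge0|]; apply: sqr_ge0. Qed.

Lemma CS d v : dotp d v * dotp d v <= dotp d d * dotp v v.
Proof.
rewrite -subr_ge0.
have -> : dotp d d * dotp v v - dotp d v * dotp d v =
  dotp (cross d v) (cross d v) by rewrite /cross !dotpE !crdE; ring.
exact: dotp_ge0.
Qed.

Lemma min3 (a b c : R) : 0 < a -> 0 < b -> 0 < c ->
  exists e, 0 < e /\ e <= a /\ e <= b /\ e <= c.
Proof.
move=> ha hb hc.
have [m [m0 [ma mb]]] : exists m, 0 < m /\ m <= a /\ m <= b.
  by case: (lerP a b) => h; [exists a | exists b]; rewrite ?lexx; split => //; lra.
by case: (lerP m c) => h; [exists m | exists c]; rewrite ?lexx; split => //; lra.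
Qed.

Lemma cramer_vec u1 u2 u3 d : det3 u1 u2 u3 != 0 ->
  d = (dotp d (cross u2 u3) / det3 u1 u2 u3) *: u1
    + (dotp d (cross u3 u1) / det3 u1 u2 u3) *: u2
    + (dotp d (cross u1 u2) / det3 u1 u2 u3) *: u3.
Proof.
move=> hD; move: (hD); rewrite /det3 => hD'.
by apply: rv3P; rewrite !crdE /cross !dotpE /det3 !crdE; field.
Qed.


Lemma cone_dot O P1 P2 P3 P4 Z f : hedral_angle O P1 P2 P3 P4 Z ->
  0 <= dotp f (P1 - O) -> 0 <= dotp f (P2 - O) ->
  0 <= dotp f (P3 - O) -> 0 <= dotp f (P4 - O) -> 0 <= dotp f (Z - O).
Proof.
case=> t [X [t0 [[l1 [l2 [l3 [l4 [g1 [g2 [g3 [g4 [hs ->]]]]]]]]]] ->]] f1 f2 f3 f4.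
have e4 : l4 = 1 - l1 - l2 - l3 by lra.
have -> : dotp f (O + t *: (l1 *: P1 + l2 *: P2 + l3 *: P3 + l4 *: P4 - O) - O) =
  t * (l1 * dotp f (P1 - O) + l2 * dotp f (P2 - O) + l3 * dotp f (P3 - O)
       + l4 * dotp f (P4 - O)).
  by rewrite !dotpE !crdE e4; ring.
apply: mulr_ge0 => //.
by do !apply: addr_ge0; apply: mulr_ge0.
Qed.

Lemma L_adm O P1 P2 P3 P4 Y f v :
  interior3 (hedral_angle O P1 P2 P3 P4) Y ->
  0 <= dotp f (P1 - O) -> 0 <= dotp f (P2 - O) ->
  0 <= dotp f (P3 - O) -> 0 <= dotp f (P4 - O) ->
  0 < dotp f v -> 0 < dotp f (Y - O).
Proof.
move=> [e [e0 hb]] f1 f2 f3 f4 fv.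
have vv0 := dotp_ge0 v.
pose a := e / (e + 1).
have a0 : 0 < a by apply: divr_gt0; lra.
have a1 : a < 1 by rewrite ltr_pdivrMr; lra.
have ae : a < e by rewrite ltr_pdivrMr; nra.
pose eta := a / (dotp v v + 1).
have eta0 : 0 < eta by apply: divr_gt0; lra.
have etaa : eta * (dotp v v + 1) = a by rewrite /eta; field; lra.
have hZ : hedral_angle O P1 P2 P3 P4 (Y - eta *: v).
  apply: hb.
  have -> : dotp (Y - eta *: v - Y) (Y - eta *: v - Y) = eta * eta * dotp v v.
    by rewrite !dotpE !crdE; ring.
  nra.
have := cone_dot _ _ _ _ _ _ _ hZ f1 f2 f3 f4.
have -> : dotp f (Y - eta *: v - O) = dotp f (Y - O) - eta * dotp f v.
  by rewrite !dotpE !crdE; ring.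
have : 0 < eta * dotp f v by apply: mulr_gt0.
lra.
Qed.


Lemma L_int O P1 P2 P3 P4 Y (c1 c2 c3 c4 : R) :
  0 < c1 -> 0 < c2 -> 0 < c3 -> 0 < c4 ->
  Y = O + c1 *: (P1 - O) + c2 *: (P2 - O) + c3 *: (P3 - O) + c4 *: (P4 - O) ->
  det3 (P1 - O) (P2 - O) (P3 - O) != 0 ->
  interior3 (hedral_angle O P1 P2 P3 P4) Y.
Proof.
move=> hc1 hc2 hc3 hc4 hY hD.
have DD : 0 < det3 (P1 - O) (P2 - O) (P3 - O) * det3 (P1 - O) (P2 - O) (P3 - O).
  exact: sq_gt0.
pose ep (c : R) (v : 'rV[R]_3) :=
  c * c * (det3 (P1 - O) (P2 - O) (P3 - O) * det3 (P1 - O) (P2 - O) (P3 - O))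
  / (dotp v v + 1).
have ep0 : forall c v, 0 < c -> 0 < ep c v.
  move=> c v hc; apply: divr_gt0; last by have := dotp_ge0 v; lra.
  by apply: mulr_gt0 => //; apply: mulr_gt0.
have [e [e0 [e1 [e2 e3]]]] := min3 _ _ _ (ep0 c1 (cross (P2 - O) (P3 - O)) hc1)
  (ep0 c2 (cross (P3 - O) (P1 - O)) hc2) (ep0 c3 (cross (P1 - O) (P2 - O)) hc3).
exists e; split => // Y' hY'.
have bnd : forall c v, 0 < c -> e <= ep c v ->
    0 < c + dotp (Y' - Y) v / det3 (P1 - O) (P2 - O) (P3 - O).
  move=> c v hc hev.
  have vv0 := dotp_ge0 v.
  have hK : ep c v * (dotp v v + 1) =
      c * c * (det3 (P1 - O) (P2 - O) (P3 - O) * det3 (P1 - O) (P2 - O) (P3 - O)).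
    by rewrite /ep; field; lra.
  have cs := CS (Y' - Y) v.
  move: hK cs DD hev hY' vv0.
  move: (ep c v) (dotp (Y' - Y) v) (dotp (Y' - Y) (Y' - Y)) (dotp v v)
        (det3 (P1 - O) (P2 - O) (P3 - O)) hD => E a dd vv D hD0 hK cs DD hev hY' vv0.
  have h1 : a * a < c * c * (D * D) by nra.
  have h2 : (a / D) * (a / D) < c * c.
    have -> : (a / D) * (a / D) = (a * a) / (D * D) by field.
    by rewrite ltr_pdivrMr.
  nra.
have hb1 := bnd _ _ hc1 e1; have hb2 := bnd _ _ hc2 e2; have hb3 := bnd _ _ hc3 e3.
have hd := cramer_vec (P1 - O) (P2 - O) (P3 - O) (Y' - Y) hD.
move: hb1 hb2 hb3 hd.
move: (dotp (Y' - Y) (cross (P2 - O) (P3 - O)) / det3 (P1 - O) (P2 - O) (P3 - O))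
      (dotp (Y' - Y) (cross (P3 - O) (P1 - O)) / det3 (P1 - O) (P2 - O) (P3 - O))
      (dotp (Y' - Y) (cross (P1 - O) (P2 - O)) / det3 (P1 - O) (P2 - O) (P3 - O))
  => b1 b2 b3 hb1 hb2 hb3 hd.
have eY' : Y' = Y + (b1 *: (P1 - O) + b2 *: (P2 - O) + b3 *: (P3 - O)).
  by rewrite -hd addrC subrK.
have T0 : 0 < (c1 + b1) + (c2 + b2) + (c3 + b3) + c4 by lra.
have Tn : (c1 + b1) + (c2 + b2) + (c3 + b3) + c4 != 0 by rewrite gt_eqF.
move: T0 Tn; set T := (c1 + b1) + (c2 + b2) + (c3 + b3) + c4 => T0 Tn.
exists T, ((c1 + b1) / T *: P1 + (c2 + b2) / T *: P2 + (c3 + b3) / T *: P3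
           + c4 / T *: P4).
split; first exact: ltW.
split.
  exists ((c1 + b1) / T), ((c2 + b2) / T), ((c3 + b3) / T), (c4 / T).
  do 4 (split; first by apply: divr_ge0; apply: ltW).
  by split => //; rewrite /T; field.
rewrite eY' hY; apply: rv3P; rewrite !crdE /T; field; exact: Tn.
Qed.


Lemma det3_cyc a b c : det3 a b c = det3 b c a.
Proof. rewrite /det3; ring. Qed.
Lemma dot_cross (k : R) a b w : dotp (k *: cross a b) w = k * det3 a b w.
Proof. rewrite /cross /det3 dotpE !crdE; ring. Qed.
Lemma det3_aba a b : det3 a b a = 0.
Proof. rewrite /det3; ring. Qed.
Lemma det3_abb a b : det3 a b b = 0.
Proof. rewrite /det3; ring. Qed.
Definition k2 u v := xc u * yc v - yc u * xc v.
Lemma det3_vert a b Y O : xc Y = xc O -> yc Y = yc O ->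
  det3 a b (Y - O) = (zc Y - zc O) * k2 a b.
Proof. by move=> hx hy; rewrite /det3 /k2 !crdE hx hy; ring. Qed.

Lemma norm_eq A O P : dual_plane A O -> dual_plane A P ->
  zc (P - O) = xc A * xc (P - O) + yc A * yc (P - O).
Proof. by rewrite /dual_plane !crdE => h1 h2; lra. Qed.

Definition Lv u v := mkv (yc v * zc u - yc u * zc v) (xc u * zc v - xc v * zc u) (k2 u v).

Lemma lift_scale A u v :
  zc u = xc A * xc u + yc A * yc u -> zc v = xc A * xc v + yc A * yc v ->
  k2 u v *: liftz A = Lv u v.
Proof.
move=> hu hv; apply: rv3P; rewrite /liftz /Lv !crdE ?mulr1 //;
  rewrite hu hv /k2; ring.
Qed.

Lemma ort_rel A B C u1 u2 u3 u4 :
  zc u1 = xc A * xc u1 + yc A * yc u1 -> zc u2 = xc A * xc u2 + yc A * yc u2 ->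
  zc u2 = xc B * xc u2 + yc B * yc u2 -> zc u3 = xc B * xc u3 + yc B * yc u3 ->
  zc u3 = xc C * xc u3 + yc C * yc u3 -> zc u4 = xc C * xc u4 + yc C * yc u4 ->
  ort A B C * (k2 u1 u2 * k2 u2 u3 * k2 u3 u4) = det3 u1 u2 u3 * det3 u2 u3 u4.
Proof.
move=> a1 a2 b2 b3 c3 c4.
have -> : ort A B C * (k2 u1 u2 * k2 u2 u3 * k2 u3 u4) =
  det3 (k2 u1 u2 *: liftz A) (k2 u2 u3 *: liftz B) (k2 u3 u4 *: liftz C).
  by rewrite /ort /det3 !crdE; ring.
rewrite (lift_scale _ _ _ a1 a2) (lift_scale _ _ _ b2 b3) (lift_scale _ _ _ c3 c4).
by rewrite /Lv /det3 /k2 !crdE; ring.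
Qed.

Lemma L_iso (a b c : R) A B C : a != 0 \/ b != 0 ->
  a * xc A + b * yc A = c -> a * xc B + b * yc B = c -> a * xc C + b * yc C = c ->
  ort A B C = 0.
Proof.
case=> hab hA hB hC.
- have eA : xc A = (c - b * yc A) / a by rewrite -hA; field.
  have eB : xc B = (c - b * yc B) / a by rewrite -hB; field.
  have eC : xc C = (c - b * yc C) / a by rewrite -hC; field.
  by rewrite /ort /liftz /det3 !crdE eA eB eC; field.
- have eA : yc A = (c - a * xc A) / b by rewrite -hA; field.
  have eB : yc B = (c - a * xc B) / b by rewrite -hB; field.
  have eC : yc C = (c - a * xc C) / b by rewrite -hC; field.
  by rewrite /ort /liftz /det3 !crdE eA eB eC; field.
Qed.

Lemma sign3 (r o k1 k2 k3 Q : R) : 0 < r * k1 -> 0 < r * k2 -> 0 < r * k3 ->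
  o * (k1 * k2 * k3) = Q -> 0 < Q -> 0 < r * o.
Proof.
move=> h1 h2 h3 hQ Q0.
have r0 : r != 0 by apply/negP => /eqP r0; move: h1; rewrite r0 mul0r ltxx.
apply: (pos_of_mul _ ((r * k1) * (r * k2) * (r * k3))); last first.
  by do 2 (apply: mulr_gt0 => //).
have -> : r * o * (r * k1 * (r * k2) * (r * k3)) = (r * r) * (r * r) * Q.
  by rewrite -hQ; ring.
by apply: mulr_gt0 => //; apply: mulr_gt0; apply: sq_gt0.
Qed.

Lemma adm4 O P1 P2 P3 P4 Y a b w (d : R) :
  interior3 (hedral_angle O P1 P2 P3 P4) Y -> xc Y = xc O -> yc Y = yc O ->
  0 <= d * det3 a b (P1 - O) -> 0 <= d * det3 a b (P2 - O) ->
  0 <= d * det3 a b (P3 - O) -> 0 <= d * det3 a b (P4 - O) ->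
  0 < d * det3 a b w -> 0 < d * (zc Y - zc O) * k2 a b.
Proof.
move=> hi hx hy g1 g2 g3 g4 gw.
have := L_adm _ _ _ _ _ _ (d *: cross a b) w hi.
by rewrite !dot_cross (det3_vert _ _ _ _ hx hy) mulrA; apply.
Qed.

Definition nrm X := mkv (xc X) (yc X) (-1).

Lemma I_hw A B C D :
  let h := nrm A + nrm B + nrm C + nrm D in
  [/\ dotp h (cross (nrm D) (nrm A)) = - (ort D A B + ort C D A),
      dotp h (cross (nrm A) (nrm B)) = - (ort A B C + ort D A B),
      dotp h (cross (nrm B) (nrm C)) = - (ort B C D + ort A B C) &
      dotp h (cross (nrm C) (nrm D)) = - (ort C D A + ort B C D)].
Proof. by split; rewrite /nrm /ort /liftz /cross /det3 dotpE !crdE; ring. Qed.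

Lemma I_Dw A B C D :
  let w1 := cross (nrm D) (nrm A) in let w2 := cross (nrm A) (nrm B) in
  let w3 := cross (nrm B) (nrm C) in let w4 := cross (nrm C) (nrm D) in
  [/\ det3 w1 w2 w3 = ort D A B * ort A B C,
      det3 w2 w3 w4 = ort A B C * ort B C D,
      det3 w3 w4 w1 = ort B C D * ort C D A &
      det3 w4 w1 w2 = ort C D A * ort D A B].
Proof. by split; rewrite /nrm /ort /liftz /cross /det3 !crdE; ring. Qed.

Lemma I_sum A B C D :
  cross (nrm D) (nrm A) + cross (nrm A) (nrm B) + cross (nrm B) (nrm C)
  + cross (nrm C) (nrm D) = mkv 0 0 (ort A B C + ort C D A).
Proof. by apply: rv3P; rewrite /nrm /ort /liftz /cross /det3 !crdE; ring. Qed.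

Lemma perp_l (k : R) X Y :
  zc (k *: cross (nrm X) (nrm Y)) =
  xc X * xc (k *: cross (nrm X) (nrm Y)) + yc X * yc (k *: cross (nrm X) (nrm Y)).
Proof. by rewrite /nrm /cross !crdE; ring. Qed.

Lemma perp_r (k : R) X Y :
  zc (k *: cross (nrm X) (nrm Y)) =
  xc Y * xc (k *: cross (nrm X) (nrm Y)) + yc Y * yc (k *: cross (nrm X) (nrm Y)).
Proof. by rewrite /nrm /cross !crdE; ring. Qed.

Lemma sign_u (r a1 a2 a3 : R) w1 w2 w3 : 0 < - r * a1 -> 0 < - r * a2 -> 0 < - r * a3 ->
  0 < r * r * det3 w1 w2 w3 ->
  0 < - r * det3 (a1^-1 *: w1) (a2^-1 *: w2) (a3^-1 *: w3).
Proof.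
move=> h1 h2 h3 hw.
have nz : forall a : R, 0 < - r * a -> a != 0.
  by move=> a ha; apply/negP => /eqP a0; move: ha; rewrite a0 mulr0 ltxx.
have n1 := nz _ h1; have n2 := nz _ h2; have n3 := nz _ h3.
apply: (pos_of_mul _ ((- r * a1) * (- r * a2) * (- r * a3))); last first.
  by do 2 (apply: mulr_gt0 => //).
have -> : - r * det3 (a1^-1 *: w1) (a2^-1 *: w2) (a3^-1 *: w3) *
  (- r * a1 * (- r * a2) * (- r * a3)) = (r * r) * (r * r * det3 w1 w2 w3).
  by rewrite /det3 !crdE; field; rewrite n1 n2 n3.
apply: mulr_gt0 => //.
have r0 : r != 0 by apply/negP => /eqP r0; move: h1; rewrite r0 oppr0 mul0r ltxx.
exact: sq_gt0.
Qed.

Lemma negneg (N a b : R) : 0 < N * a -> 0 < N * b -> 0 < - N * - (a + b).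
Proof. by move=> h1 h2; rewrite mulNr mulrN opprK mulrDr; apply: addr_gt0. Qed.

Lemma dotpZ (k : R) a b : dotp a (k *: b) = k * dotp a b.
Proof. by rewrite !dotpE !crdE; ring. Qed.

Lemma dotp_split a O P : dotp a P = dotp a O + dotp a (P - O).
Proof. by rewrite !dotpE !crdE; ring. Qed.

Lemma shift_rel O P1 P2 P3 P4 (s t : R) :
  (P1 - O) + s *: ((P3 - O) - (P1 - O)) = (P2 - O) + t *: ((P4 - O) - (P2 - O)) ->
  P1 + s *: (P3 - P1) = P2 + t *: (P4 - P2).
Proof.
case/crd_eq; rewrite !crdE => cx cy cz.
by apply: rv3P; rewrite !crdE; lra.
Qed.

Lemma nrm_sum_nz A B C D : nrm A + nrm B + nrm C + nrm D != 0.
Proof.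
apply/eqP => /crd_eq [_ _]; rewrite /nrm !crdE => hz; lra.
Qed.

Lemma neq_succ (x : R) : x != x + 1.
Proof. by apply/eqP => e; lra. Qed.

Lemma scl (k a : R) w : a != 0 -> (k * a) *: (a^-1 *: w) = k *: w.
Proof. by move=> ha; rewrite scalerA -mulrA mulfV // mulr1. Qed.
End S.


Lemma backward (R : realType) (A B C D O P1 P2 P3 P4 : 'rV[R]_3) :
  is_convex_4hedral O P1 P2 P3 P4 -> admissible O P1 P2 P3 P4 ->
  subset3 (flat_angle O P1 P2) (dual_plane A) ->
  subset3 (flat_angle O P2 P3) (dual_plane B) ->
  subset3 (flat_angle O P3 P4) (dual_plane C) ->
  subset3 (flat_angle O P4 P1) (dual_plane D) ->
  convex_quad A B C D /\ ~ in_isotropic_plane A B C D.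
Proof.
case=> [[ncol [s [t [hs [ht hst]]]]] [n [c [_ [h1 [h2 [h3 [h4 hO]]]]]]]].
case=> Y [Yx [Yy hint]] SA SB SC SD.
have hD := L_noncol _ _ _ _ _ _ ncol h1 h2 h3 hO.
have hu : (P1 - O) + s *: ((P3 - O) - (P1 - O)) = (P2 - O) + t *: ((P4 - O) - (P2 - O)).
  by case/crd_eq: hst; rewrite !crdE => ex ey ez; apply: rv3P; rewrite !crdE; lra.
have [q2 q3 q4] := L_sgn _ _ _ _ _ _ hs ht hu hD.
have q1 := sq_gt0 _ hD.
have [aO [a1 a2]] : [/\ dual_plane A O, dual_plane A P1 & dual_plane A P2].
  by have [f0 [f1 f2]] := L_flat O P1 P2; split; apply: SA.
have [bO [b2 b3]] : [/\ dual_plane B O, dual_plane B P2 & dual_plane B P3].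
  by have [f0 [f1 f2]] := L_flat O P2 P3; split; apply: SB.
have [cO [c3 c4]] : [/\ dual_plane C O, dual_plane C P3 & dual_plane C P4].
  by have [f0 [f1 f2]] := L_flat O P3 P4; split; apply: SC.
have [dO [d4 d1]] : [/\ dual_plane D O, dual_plane D P4 & dual_plane D P1].
  by have [f0 [f1 f2]] := L_flat O P4 P1; split; apply: SD.
have nA1 := norm_eq _ _ _ aO a1; have nA2 := norm_eq _ _ _ aO a2.
have nB2 := norm_eq _ _ _ bO b2; have nB3 := norm_eq _ _ _ bO b3.
have nC3 := norm_eq _ _ _ cO c3; have nC4 := norm_eq _ _ _ cO c4.
have nD4 := norm_eq _ _ _ dO d4; have nD1 := norm_eq _ _ _ dO d1.
have oABC := ort_rel _ _ _ _ _ _ _ nA1 nA2 nB2 nB3 nC3 nC4.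
have oBCD := ort_rel _ _ _ _ _ _ _ nB2 nB3 nC3 nC4 nD4 nD1.
have oCDA := ort_rel _ _ _ _ _ _ _ nC3 nC4 nD4 nD1 nA1 nA2.
have oDAB := ort_rel _ _ _ _ _ _ _ nD4 nD1 nA1 nA2 nB2 nB3.
have r12 := adm4 _ _ _ _ _ _ (P1 - O) (P2 - O) (P3 - O) (det3 (P1 - O) (P2 - O) (P3 - O)) hint Yx Yy.
have r23 := adm4 _ _ _ _ _ _ (P2 - O) (P3 - O) (P4 - O) (det3 (P1 - O) (P2 - O) (P3 - O)) hint Yx Yy.
have r34 := adm4 _ _ _ _ _ _ (P3 - O) (P4 - O) (P1 - O) (det3 (P1 - O) (P2 - O) (P3 - O)) hint Yx Yy.
have r41 := adm4 _ _ _ _ _ _ (P4 - O) (P1 - O) (P2 - O) (det3 (P1 - O) (P2 - O) (P3 - O)) hint Yx Yy.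
move: r12 r23 r34 r41.
rewrite !det3_aba !det3_abb !mulr0 !lexx.
rewrite -(det3_cyc (P4 - O) (P1 - O) (P2 - O)) -(det3_cyc (P1 - O) (P2 - O) (P3 - O)).
rewrite -(det3_cyc (P2 - O) (P3 - O) (P4 - O)) -(det3_cyc (P3 - O) (P4 - O) (P1 - O)).
move=> r12 r23 r34 r41.
have {}r12 := r12 isT isT (ltW q1) (ltW q4) q1.
have {}r23 := r23 (ltW q1) isT isT (ltW q2) q2.
have {}r34 := r34 (ltW q3) (ltW q2) isT isT q3.
have {}r41 := r41 isT (ltW q4) (ltW q3) isT q4.
have q23 : 0 < det3 (P2 - O) (P3 - O) (P4 - O) * det3 (P3 - O) (P4 - O) (P1 - O).
  apply: (pos_of_mul _ _ _ q1).
  have -> : det3 (P2 - O) (P3 - O) (P4 - O) * det3 (P3 - O) (P4 - O) (P1 - O) *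
    (det3 (P1 - O) (P2 - O) (P3 - O) * det3 (P1 - O) (P2 - O) (P3 - O)) =
    (det3 (P1 - O) (P2 - O) (P3 - O) * det3 (P2 - O) (P3 - O) (P4 - O)) *
    (det3 (P1 - O) (P2 - O) (P3 - O) * det3 (P3 - O) (P4 - O) (P1 - O)) by ring.
  exact: mulr_gt0.
have q34 : 0 < det3 (P3 - O) (P4 - O) (P1 - O) * det3 (P4 - O) (P1 - O) (P2 - O).
  apply: (pos_of_mul _ _ _ q1).
  have -> : det3 (P3 - O) (P4 - O) (P1 - O) * det3 (P4 - O) (P1 - O) (P2 - O) *
    (det3 (P1 - O) (P2 - O) (P3 - O) * det3 (P1 - O) (P2 - O) (P3 - O)) =
    (det3 (P1 - O) (P2 - O) (P3 - O) * det3 (P3 - O) (P4 - O) (P1 - O)) *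
    (det3 (P1 - O) (P2 - O) (P3 - O) * det3 (P4 - O) (P1 - O) (P2 - O)) by ring.
  exact: mulr_gt0.
have q41 : 0 < det3 (P4 - O) (P1 - O) (P2 - O) * det3 (P1 - O) (P2 - O) (P3 - O).
  by rewrite mulrC.
have sABC := sign3 _ _ _ _ _ _ r12 r23 r34 oABC q2.
have sBCD := sign3 _ _ _ _ _ _ r23 r34 r41 oBCD q23.
have sCDA := sign3 _ _ _ _ _ _ r34 r41 r12 oCDA q34.
have sDAB := sign3 _ _ _ _ _ _ r41 r12 r23 oDAB q41.
have hl : forall X : 'rV[R]_3, dotp (mkv 0 0 1) (liftz X) = 1.
  by move=> X; rewrite dotpE /liftz !crdE; ring.
have [s' [t' [hs' [ht' hc]]]] :=
  L_conv _ _ _ _ _ _ sABC sBCD sCDA sDAB (hl A) (hl B) (hl C) (hl D).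
split.
  split; first by move/L_col_ort => h0; move: sABC; rewrite h0 mulr0 ltxx.
  exists s', t'; split => //; split => //.
  case/crd_eq: hc; rewrite /liftz !crdE => ex ey _.
  move: aO bO cO dO; rewrite /dual_plane => aO bO cO dO.
  have ex' := f_equal (fun r => r * xc O) ex.
  have ey' := f_equal (fun r => r * yc O) ey.
  simpl in ex', ey'.
  have eA : zc A = xc A * xc O + yc A * yc O - zc O by lra.
  have eB : zc B = xc B * xc O + yc B * yc O - zc O by lra.
  have eC : zc C = xc C * xc O + yc C * yc O - zc O by lra.
  have eD : zc D = xc D * xc O + yc D * yc O - zc O by lra.
  apply: rv3P; rewrite !crdE //; rewrite eA eB eC eD; lra.
case=> a [b [c0 [hab hall]]].
have hA : a * xc A + b * yc A = c0 by apply: hall; rewrite !inE eqxx.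
have hB : a * xc B + b * yc B = c0 by apply: hall; rewrite !inE eqxx ?orbT.
have hC : a * xc C + b * yc C = c0 by apply: hall; rewrite !inE eqxx ?orbT.
have := L_iso _ _ _ _ _ _ hab hA hB hC.
by move=> h0; move: sABC; rewrite h0 mulr0 ltxx.
Qed.


Lemma forward (R : realType) (A B C D : 'rV[R]_3) :
  convex_quad A B C D -> ~ in_isotropic_plane A B C D ->
  exists O P1 P2 P3 P4 : 'rV[R]_3,
      is_convex_4hedral O P1 P2 P3 P4 /\ admissible O P1 P2 P3 P4 /\
      subset3 (flat_angle O P1 P2) (dual_plane A) /\
      subset3 (flat_angle O P2 P3) (dual_plane B) /\
      subset3 (flat_angle O P3 P4) (dual_plane C) /\
      subset3 (flat_angle O P4 P1) (dual_plane D).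
Proof.
case=> ncol [s [t [hs [ht hst]]]] niso.
have tn : t != 0 by case/andP: ht => t0 _; rewrite gt_eqF.
case/crd_eq: (hst); rewrite !crdE => ex ey ez.
have eDx : xc D = (xc A + s * (xc C - xc A) - xc B + t * xc B) / t by rewrite ex; field.
have eDy : yc D = (yc A + s * (yc C - yc A) - yc B + t * yc B) / t by rewrite ey; field.
have eDz : zc D = (zc A + s * (zc C - zc A) - zc B + t * zc B) / t by rewrite ez; field.
pose n1 := yc (B - A) * zc (C - A) - zc (B - A) * yc (C - A).
pose n2 := zc (B - A) * xc (C - A) - xc (B - A) * zc (C - A).
have pl : forall X, X \in [:: A; B; C; D] ->
    n1 * (xc X - xc A) + n2 * (yc X - yc A) + ort A B C * (zc X - zc A) = 0.
  move=> X; rewrite !inE => /or4P [] /eqP ->.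
  - by rewrite /n1 /n2; ring.
  - by rewrite /n1 /n2 /ort /liftz /det3 !crdE; ring.
  - by rewrite /n1 /n2 /ort /liftz /det3 !crdE; ring.
  - by rewrite /n1 /n2 /ort /liftz /det3 !crdE eDx eDy eDz; field.
have N0 : ort A B C != 0.
  apply/negP => /eqP N0.
  case: (eqVneq n1 0) => h1; first case: (eqVneq n2 0) => h2.
  - apply: ncol; apply: L_cross0.
    + by move: h1; rewrite /n1.
    + by move: h2; rewrite /n2.
    + by move: N0; rewrite /ort /liftz /det3 !crdE => N0; rewrite -N0; ring.
  - apply: niso; exists n1, n2, (n1 * xc A + n2 * yc A); split; first by right.
    by move=> X /pl; rewrite N0 mul0r addr0 => h; lra.
  - apply: niso; exists n1, n2, (n1 * xc A + n2 * yc A); split; first by left.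
    by move=> X /pl; rewrite N0 mul0r addr0 => h; lra.
have hl : liftz A + s *: (liftz C - liftz A) = liftz B + t *: (liftz D - liftz B).
  by apply: rv3P; rewrite /liftz !crdE; [exact: ex | exact: ey | ring].
have [q2 q3 q4] := L_sgn _ _ _ _ _ _ hs ht hl N0.
have q1 := sq_gt0 _ N0.
move: q2 q3 q4 q1 N0 pl.
set N := ort A B C => q2 q3 q4 q1 N0 pl.
pose O := mkv (- n1 / N) (- n2 / N) (- (n1 * xc A + n2 * yc A + N * zc A) / N).
have dO : forall X, X \in [:: A; B; C; D] -> dual_plane X O.
  move=> X hX; have := pl X hX; rewrite /dual_plane /O !crdE => h.
  have ez' : zc X = zc A - (n1 * (xc X - xc A) + n2 * (yc X - yc A)) / N.
    have hM : n1 * (xc X - xc A) + n2 * (yc X - yc A) = - (N * (zc X - zc A)) by lra.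
    by rewrite hM; field.
  by rewrite ez'; field.
have [hw1 hw2 hw3 hw4] := I_hw A B C D.
have [Dw1 Dw2 Dw3 Dw4] := I_Dw A B C D.
have hsum := I_sum A B C D.
have pA := perp_l; have pR := perp_r.
rewrite -/N in hw1 hw2 hw3 hw4 Dw1 Dw2 Dw3 Dw4 hsum.
move: hw1 hw2 hw3 hw4 Dw1 Dw2 Dw3 Dw4 hsum.
set w1 := cross (nrm D) (nrm A); set w2 := cross (nrm A) (nrm B).
set w3 := cross (nrm B) (nrm C); set w4 := cross (nrm C) (nrm D).
set h := nrm A + nrm B + nrm C + nrm D.
move=> hw1 hw2 hw3 hw4 Dw1 Dw2 Dw3 Dw4 hsum.
have g1 : 0 < - N * dotp h w1 by rewrite hw1; apply: negneg.
have g2 : 0 < - N * dotp h w2 by rewrite hw2; apply: negneg.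
have g3 : 0 < - N * dotp h w3 by rewrite hw3; apply: negneg.
have g4 : 0 < - N * dotp h w4 by rewrite hw4; apply: negneg.
have nz : forall a : R, 0 < - N * a -> a != 0.
  by move=> a ha; apply/negP => /eqP a0; move: ha; rewrite a0 mulr0 ltxx.
have z1 := nz _ g1; have z2 := nz _ g2; have z3 := nz _ g3; have z4 := nz _ g4.
pose P1 := O + (dotp h w1)^-1 *: w1.
pose P2 := O + (dotp h w2)^-1 *: w2.
pose P3 := O + (dotp h w3)^-1 *: w3.
pose P4 := O + (dotp h w4)^-1 *: w4.
have eu1 : P1 - O = (dotp h w1)^-1 *: w1 by rewrite /P1 (addrC O) addrK.
have eu2 : P2 - O = (dotp h w2)^-1 *: w2 by rewrite /P2 (addrC O) addrK.
have eu3 : P3 - O = (dotp h w3)^-1 *: w3 by rewrite /P3 (addrC O) addrK.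
have eu4 : P4 - O = (dotp h w4)^-1 *: w4 by rewrite /P4 (addrC O) addrK.
have pp : forall a b : R, 0 < N * a -> 0 < N * b -> 0 < N * N * (a * b).
  move=> a b ha hb.
  have -> : N * N * (a * b) = (N * a) * (N * b) by ring.
  exact: mulr_gt0.
have u123 : 0 < - N * det3 (P1 - O) (P2 - O) (P3 - O).
  by rewrite eu1 eu2 eu3; apply: sign_u => //; rewrite Dw1; apply: pp.
have u234 : 0 < - N * det3 (P2 - O) (P3 - O) (P4 - O).
  by rewrite eu2 eu3 eu4; apply: sign_u => //; rewrite Dw2; apply: pp.
have u341 : 0 < - N * det3 (P3 - O) (P4 - O) (P1 - O).
  by rewrite eu3 eu4 eu1; apply: sign_u => //; rewrite Dw3; apply: pp.
have u412 : 0 < - N * det3 (P4 - O) (P1 - O) (P2 - O).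
  by rewrite eu4 eu1 eu2; apply: sign_u => //; rewrite Dw4; apply: pp.
have h1 : dotp h (P1 - O) = 1 by rewrite eu1 dotpZ mulVf.
have h2 : dotp h (P2 - O) = 1 by rewrite eu2 dotpZ mulVf.
have h3 : dotp h (P3 - O) = 1 by rewrite eu3 dotpZ mulVf.
have h4 : dotp h (P4 - O) = 1 by rewrite eu4 dotpZ mulVf.
have [s' [t' [hs' [ht' hc]]]] := L_conv _ _ _ _ _ _ u123 u234 u341 u412 h1 h2 h3 h4.
have Dn : det3 (P1 - O) (P2 - O) (P3 - O) != 0.
  by apply/negP => /eqP h0; move: u123; rewrite h0 mulr0 ltxx.
exists O, P1, P2, P3, P4.
split; [split; [split|] | split].
- by move/(L_col_det O) => h0; move: Dn; rewrite h0 eqxx.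
- exists s', t'; split => //; split => //.
  exact: shift_rel hc.
- exists h, (dotp h O + 1); split.
    exact: nrm_sum_nz.
  rewrite (dotp_split h O P1) (dotp_split h O P2) (dotp_split h O P3) (dotp_split h O P4) h1 h2 h3 h4; do 4 (split => //).
  exact: neq_succ.
- exists (O + mkv 0 0 (- N * (N + ort C D A))).
  split; first by rewrite !crdE addr0.
  split; first by rewrite !crdE addr0.
  apply: (L_int _ _ _ _ _ _ _ _ _ _ g1 g2 g3 g4 _ Dn).
  rewrite eu1 eu2 eu3 eu4.
  have -> : O + (- N * dotp h w1) *: ((dotp h w1)^-1 *: w1)
     + (- N * dotp h w2) *: ((dotp h w2)^-1 *: w2)
     + (- N * dotp h w3) *: ((dotp h w3)^-1 *: w3)
     + (- N * dotp h w4) *: ((dotp h w4)^-1 *: w4) = O + (- N) *: (w1 + w2 + w3 + w4).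
    by rewrite !scl // !scalerDr !addrA.
  by rewrite hsum; apply: rv3P; rewrite !crdE; ring.
have mA : A \in [:: A; B; C; D] by rewrite !inE eqxx.
have mB : B \in [:: A; B; C; D] by rewrite !inE eqxx ?orbT.
have mC : C \in [:: A; B; C; D] by rewrite !inE eqxx ?orbT.
have mD : D \in [:: A; B; C; D] by rewrite !inE eqxx ?orbT.
split; first by apply: L_sub (dO _ mA) _ _; [rewrite eu1; apply: perp_r | rewrite eu2; apply: perp_l].
split; first by apply: L_sub (dO _ mB) _ _; [rewrite eu2; apply: perp_r | rewrite eu3; apply: perp_l].
split; first by apply: L_sub (dO _ mC) _ _; [rewrite eu3; apply: perp_r | rewrite eu4; apply: perp_l].
by apply: L_sub (dO _ mD) _ _; [rewrite eu4; apply: perp_r | rewrite eu1; apply: perp_l].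
Qed.

Theorem lemma1 (R : realType) (A B C D : 'rV[R]_3) :
  (convex_quad A B C D /\ ~ in_isotropic_plane A B C D) <->
  (exists O P1 P2 P3 P4 : 'rV[R]_3,
      is_convex_4hedral O P1 P2 P3 P4 /\ admissible O P1 P2 P3 P4 /\
      subset3 (flat_angle O P1 P2) (dual_plane A) /\
      subset3 (flat_angle O P2 P3) (dual_plane B) /\
      subset3 (flat_angle O P3 P4) (dual_plane C) /\
      subset3 (flat_angle O P4 P1) (dual_plane D)).
Proof.
split.
  by case=> hq hn; exact: forward hq hn.
case=> O [P1 [P2 [P3 [P4 [h1 [h2 [SA [SB [SC SD]]]]]]]]].
exact: backward h1 h2 SA SB SC SD.
Qed.
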